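(* Let $\langle \mathscr{A} \mid \mathscr{R} \rangle$ be a strongly $C(4)$ presentation. Then the monoid presented is left cancellative if and only if $\mathscr{R}$ contains no relation of the form $(ar, as)$ where $a \in \mathscr{A}$ and $r, s \in \mathscr{A}^*$.
   Context: A monoid presentation $\langle \mathscr{A} \mid \mathscr{R} \rangle$ consists of an alphabet $\mathscr{A}$ and a set $\mathscr{R} \subseteq \mathscr{A}^* \times \mathscr{A}^*$ of relations; the monoid presented is $\mathscr{A}^*$ modulo the smallest congruence containing $\mathscr{R}$. A relation word is a word occurring as one side of a relation. A piece is a word which occurs as a factor of two distinct relation words, or in two different (possibly overlapping) positions within one relation word; the empty word is always a piece. The presentation is $C(n)$ if no relation word can be written as a product of strictly fewer than $n$ pieces, and strongly $C(n)$ if it is $C(n)$ and additionally has no repeated relation words (no word occurs more than once as a side of a relation). *)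

(* Defs.v *)
From mathcomp Require Import all_boot.
Set Implicit Arguments. Unset Strict Implicit. Unset Printing Implicit Defensive.

(* A presentation <A | R>: words are [seq A]; R is an arbitrary (possibly
   infinite) set of relations, i.e. a predicate on pairs of words. *)
Definition word (A : Type) := seq A.
Definition relset (A : Type) := word A * word A -> Prop.

Definition relation_word (A : Type) (R : relset A) (w : word A) : Prop :=
  exists v, R (w, v) \/ R (v, w).

Definition piece (A : Type) (R : relset A) (p : word A) : Prop :=
  p = [::] \/
  exists u v x1 y1 x2 y2 : word A,
    [/\ relation_word R u, relation_word R v,
        u = x1 ++ p ++ y1, v = x2 ++ p ++ y2 & (u <> v \/ x1 <> x2)].

Definition C_cond (A : Type) (R : relset A) (n : nat) : Prop :=
  forall (w : word A) (ps : seq (word A)),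
    relation_word R w -> (forall i, i < size ps -> piece R (nth [::] ps i)) ->
    size ps < n -> flatten ps <> w.

Definition no_repeated_relation_words (A : Type) (R : relset A) : Prop :=
  forall u v u' v' : word A, R (u, v) -> R (u', v') ->
    [/\ u <> v', u = u' -> v = v' & v = v' -> u = u'].

Definition strongly_C (A : Type) (R : relset A) (n : nat) : Prop :=
  C_cond R n /\ no_repeated_relation_words R.

Inductive pres_cong (A : Type) (R : relset A) : word A -> word A -> Prop :=
  | pc_step : forall x y l r, R (l, r) -> pres_cong R (x ++ l ++ y) (x ++ r ++ y)
  | pc_refl : forall u, pres_cong R u u
  | pc_sym : forall u v, pres_cong R u v -> pres_cong R v u
  | pc_trans : forall u v w, pres_cong R u v -> pres_cong R v w -> pres_cong R u w.

Definition left_cancellative (A : Type) (R : relset A) : Prop :=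
  forall a b c : word A, pres_cong R (a ++ b) (a ++ c) -> pres_cong R b c.

(* Main.v *)
Require Import Defs.
From mathcomp Require Import all_boot.
From mathcomp Require Import zify.
From Stdlib Require Import Classical.
Set Implicit Arguments. Unset Strict Implicit. Unset Printing Implicit Defensive.

Definition rl (A : Type) (R : relset A) (l r : word A) := R (l, r) \/ R (r, l).
Definition step (A : Type) (R : relset A) (s s' : word A) :=
  exists c l r d, [/\ rl R l r, s = c ++ l ++ d & s' = c ++ r ++ d].
Inductive steps (A : Type) (R : relset A) : nat -> word A -> word A -> Prop :=
| st0 u : steps R 0 u u
| stS n u v w : step R u v -> steps R n v w -> steps R n.+1 u w.

Lemma step_sym A (R : relset A) u v : step R u v -> step R v u.
Proof.
move=> [c [l [r [d [H1 H2 H3]]]]]; exists c, r, l, d; split=> //.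
by case: H1; [right|left].
Qed.

Lemma steps_cat A (R : relset A) m n a b c :
  steps R m a b -> steps R n b c -> steps R (m + n) a c.
Proof.
elim=> [u //| k u v w H _ IH] Hn; rewrite addSn; apply: stS H _; exact: IH.
Qed.

Lemma steps1 A (R : relset A) u v : step R u v -> steps R 1 u v.
Proof. move=> H; apply: stS H (st0 _ _). Qed.

Lemma steps_rev A (R : relset A) n u v : steps R n u v -> steps R n v u.
Proof.
elim=> [u0|k u0 v0 w0 H _ IH]; first exact: st0.
rewrite -addn1; apply: steps_cat IH _; apply: steps1; exact: step_sym.
Qed.

Lemma steps_pre A (R : relset A) n p a b :
  steps R n a b -> steps R n (p ++ a) (p ++ b).
Proof.
elim=> [u|k u v w [c [l [r [d [H1 H2 H3]]]]] _ IH]; first exact: st0.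
apply: stS IH; exists (p ++ c), l, r, d; split=> //; by rewrite ?H2 ?H3 catA.
Qed.

Lemma rl_rw A (R : relset A) l r : rl R l r -> relation_word R l /\ relation_word R r.
Proof.
case=> H; split.
- by exists r; left.
- by exists l; right.
- by exists r; right.
- by exists l; left.
Qed.

Lemma rw_ne A (R : relset A) w : C_cond R 4 -> relation_word R w -> w <> [::].
Proof.
move=> C Hw E; apply: (C w [::] Hw) => //; by rewrite E.
Qed.

Lemma one_piece A (R : relset A) w : C_cond R 4 -> relation_word R w -> piece R w -> False.
Proof.
move=> C Hw Hp; apply: (C w [:: w] Hw) => //; last by rewrite /= cats0.
by move=> [|i] //= _.
Qed.

Lemma two_piece A (R : relset A) w p q : C_cond R 4 -> relation_word R w ->
  piece R p -> piece R q -> w = p ++ q -> False.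
Proof.
move=> C Hw Hp Hq E; apply: (C w [:: p; q] Hw) => //; last by rewrite /= cats0.
by move=> [|[|i]] //= _.
Qed.

Lemma piece_intro A (R : relset A) p u v x1 y1 x2 y2 :
  relation_word R u -> relation_word R v -> u = x1 ++ p ++ y1 -> v = x2 ++ p ++ y2 ->
  (u <> v \/ x1 <> x2) -> piece R p.
Proof.
move=> H1 H2 H3 H4 H5; right; exists u, v, x1, y1, x2, y2; by split.
Qed.

Lemma partner A (R : relset A) l r u : no_repeated_relation_words R ->
  rl R l r -> rl R r u -> u = l.
Proof.
move=> NR [H1|H1] [H2|H2].
- by case: (NR _ _ _ _ H2 H1).
- by case: (NR _ _ _ _ H1 H2) => _ _ ->.
- by case: (NR _ _ _ _ H1 H2) => _ -> .
- by case: (NR _ _ _ _ H1 H2).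
Qed.

Lemma trich A (l1 l2 : seq A) :
  (exists e, l2 = l1 ++ e) \/ (exists e, l1 = l2 ++ e) \/
  exists c a b l1' l2', [/\ a <> b, l1 = c ++ a :: l1' & l2 = c ++ b :: l2'].
Proof.
elim: l1 l2 => [|a l1 IH] [|b l2].
- by left; exists [::].
- by left; exists (b :: l2).
- by right; left; exists (a :: l1).
- case: (classic (a = b)) => [<-|Hab].
  + case: (IH l2) => [[e ->]|[[e ->]|[c [x [y [l1' [l2' [H1 H2 H3]]]]]]]].
    * by left; exists e.
    * by right; left; exists e.
    * right; right; exists (a :: c), x, y, l1', l2'; by rewrite H2 H3.
  + right; right; exists [::], a, b, l1, l2; by split.
Qed.

Lemma split_first A (R : relset A) n y a z s : y <> z -> steps R n (y :: a) (z :: s) ->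
  exists k a' l r d, [/\ k < n, steps R k a a', rl R l r, y :: a' = l ++ d &
                      steps R (n - k.+1) (r ++ d) (z :: s)].
Proof.
move=> Hyz H.
remember (y :: a) as ya eqn:E. remember (z :: s) as zs eqn:F.
elim: H a E F => [u|k u v w St Sts IH] a E F.
- by move: F; rewrite E => -[Ey _]; case: Hyz.
- case: St => [c [l [r [d [H1 H2 H3]]]]].
  case: c H2 H3 => [|c0 c] /= H2 H3.
  + exists 0, a, l, r, d; split=> //; first exact: st0.
    * by rewrite -E.
    * by rewrite subn1 /= -H3.
  + rewrite E in H2; case: H2 => Ey Ha.
    have [k' [a' [l' [r' [d' [K1 K2 K3 K4 K5]]]]]] := IH (c ++ r ++ d) ltac:(by rewrite H3 -Ey) F.
    exists k'.+1, a', l', r', d'; split=> //.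
    apply: stS K2; exists c, l, r, d; by split.
Qed.

Definition MCp A (R : relset A) n := forall (x : A) u v,
  steps R n (x :: u) (x :: v) -> exists2 m, m <= n & steps R m u v.
Definition Dp A (R : relset A) n := forall (W p : word A) a0 al0 t z s,
  relation_word R W -> W = p ++ a0 :: al0 -> p <> [::] -> piece R p -> a0 <> z ->
  steps R n ((a0 :: al0) ++ t) (z :: s) -> False.

Lemma pcancel A (R : relset A) n (H : forall m, m < n -> MCp R m) p :
  forall k a b, k < n -> steps R k (p ++ a) (p ++ b) -> exists2 m, m <= k & steps R m a b.
Proof.
elim: p => [|x p IH] k a b Hk Hs; first by exists k.
have [m1 Hm1 Hs1] := H k Hk x (p ++ a) (p ++ b) Hs.
have [m2 Hm2 Hs2] := IH m1 a b (leq_ltn_trans Hm1 Hk) Hs1.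
exists m2 => //; exact: leq_trans Hm2 Hm1.
Qed.

Lemma steps_inv0 A (R : relset A) a b : steps R 0 a b -> a = b.
Proof. by move=> H; inversion H. Qed.

Lemma steps_invS A (R : relset A) n a b : steps R n.+1 a b -> exists v, step R a v /\ steps R n v b.
Proof. move=> H; inversion H; subst; by exists v. Qed.

Lemma cat_head A (c x y : seq A) a b : c ++ a :: x = c ++ b :: y -> a = b.
Proof. by elim: c => [|c0 c IH] /= [] // /IH. Qed.

Lemma main A (R : relset A) : C_cond R 4 -> no_repeated_relation_words R ->
  ~ (exists (a : A) (r s : word A), R (a :: r, a :: s)) ->
  forall n, MCp R n /\ Dp R n.
Proof.
move=> C4 NR NA.
elim/ltn_ind => n IH.
have IHM : forall m, m < n -> MCp R m by move=> m h; exact: (IH m h).1.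
have IHD : forall m, m < n -> Dp R m by move=> m h; exact: (IH m h).2.
split.
- move=> x u v Hs.
  case: n IH IHM IHD Hs => [|n] IH IHM IHD Hs.
    by move/steps_inv0: Hs => [->]; exists 0 => //; exact: st0.
  have [v1 [[c [l [r [d [Hlr E1 E2]]]]] Hs']] := steps_invS Hs.
  have [Hl Hr] := rl_rw Hlr.
  case: c E1 E2 => [|c0 c] /= E1 E2; last first.
    case: E1 => Ex Eu; subst v1; rewrite -Ex in Hs'.
    have [m Hm Hm'] := IHM n (ltnSn n) x (c ++ r ++ d) v Hs'.
    exists m.+1 => //; apply: stS Hm'; exists c, l, r, d; by split.
  case: l Hlr Hl E1 (rw_ne C4 Hl) => [|l0 l1] Hlr Hl E1 _ //.
  case: r Hlr Hr E2 Hl (rw_ne C4 Hr) => [|r0 r1] Hlr Hr E2 Hl _ //.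
  case: E1 => El0 Eu; subst v1 u l0.
  have Hr0 : r0 <> x.
    move=> Er; apply: NA; subst r0; case: Hlr => H.
    + by exists x, l1, r1.
    + by exists x, r1, l1.
  have [k [a' [l' [r' [d' [K1 K2 K3 K4 K5]]]]]] := split_first Hr0 Hs'.
  have [Hl' Hr'] := rl_rw K3.
  have : l' = r0 :: r1 \/ exists c a b l1' l2',
      [/\ a <> b, r0 :: r1 = c ++ a :: l1' & l' = c ++ b :: l2'].
    case: (trich (r0 :: r1) l') => [[e Ee]|[[e Ee]|Hm]].
    + case: e Ee => [|e0 e] Ee; first by left; rewrite Ee cats0.
      exfalso; apply: (one_piece C4 Hr).
      apply: (piece_intro (x1 := [::]) (y1 := [::]) (x2 := [::]) (y2 := e0 :: e) Hr Hl');
        rewrite ?cats0 //.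
      left => E; move: (congr1 size Ee); rewrite -E size_cat /=; lia.
    + case: e Ee => [|e0 e] Ee; first by left; rewrite Ee cats0.
      exfalso; apply: (one_piece C4 Hl').
      apply: (piece_intro (x1 := [::]) (y1 := [::]) (x2 := [::]) (y2 := e0 :: e) Hl' Hr);
        rewrite ?cats0 //.
      left => E; move: (congr1 size Ee); rewrite -E size_cat /=; lia.
    + by right.
  case=> [El'|[c [a1 [b1 [l1' [l2' [Hab Er El']]]]]]].
  + subst l'; case: K4 => Ea'; subst a'.
    have Er' : r' = x :: l1 := partner NR Hlr K3.
    subst r'.
    have [m2 Hm2 Hs2] := IHM (n - k.+1) ltac:(lia) x (l1 ++ d') v K5.
    have [m1 Hm1 Hs1] := pcancel IHM (ltnW K1) K2.
    exists (m1 + m2); first by lia.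
    apply: steps_cat Hs2; exact: steps_pre.
  + case: c Er El' => [|c0 c1] /= Er El'.
      by case: Er => Ea _; subst l'; case: K4 => Eb _; exfalso; apply: Hab; rewrite -Ea Eb.
    case: Er => Ec0 Er1; subst c0 r1 l'.
    case: K4 => Ea'; subst a'.
    have K2' : steps R k (c1 ++ (a1 :: l1' ++ d)) (c1 ++ (b1 :: l2' ++ d')).
      have K2'' : steps R k ((c1 ++ a1 :: l1') ++ d) ((c1 ++ b1 :: l2') ++ d') := K2.
      by rewrite -!catA in K2''.
    have [m Hm Hms] := pcancel IHM (ltnW K1) K2'.
    exfalso; apply: (IHD m _ (r0 :: c1 ++ a1 :: l1') (r0 :: c1) a1 l1' d b1 (l2' ++ d') Hr) => //.
    * by lia.
    * apply: (piece_intro (x1 := [::]) (y1 := a1 :: l1') (x2 := [::]) (y2 := b1 :: l2') Hr Hl') => //.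
      left => E; apply: Hab; apply: (@cat_head _ (r0 :: c1)); exact: E.
- move=> W p a0 al0 t z s HW HWe Hp Hpp Hz Hst.
  have [k [a' [l [r [d [K1 K2 K3 K4 K5]]]]]] := split_first Hz Hst.
  have [Hl Hr] := rl_rw K3.
  case: (trich (a0 :: al0) l) => [[e Ee]|[[e Ee]|[c [a1 [b1 [al1 [l1 [Hab Ea El]]]]]]]].
  + apply: (two_piece C4 HW Hpp _ HWe).
    apply: (piece_intro (x1 := p) (y1 := [::]) (x2 := [::]) (y2 := e) HW Hl);
      rewrite ?cats0 //; by right.
  + apply: (one_piece C4 Hl).
    apply: (piece_intro (x1 := p) (y1 := e) (x2 := [::]) (y2 := [::]) HW Hl);
      rewrite ?cats0 //; [by rewrite HWe Ee | by right].
  + case: c Ea El => [|c0 c1] /= Ea El.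
      case: Ea => Ea _; subst l; case: K4 => Eb _; by exfalso; apply: Hab; rewrite -Ea Eb.
    case: Ea => Ec0 Eal0; subst c0 al0 l.
    case: K4 => Ea'; subst a'.
    have K2' : steps R k (c1 ++ (a1 :: al1 ++ t)) (c1 ++ (b1 :: l1 ++ d)).
      have K2'' : steps R k ((c1 ++ a1 :: al1) ++ t) ((c1 ++ b1 :: l1) ++ d) := K2.
      by rewrite -!catA in K2''.
    have [m Hm Hms] := pcancel IHM K1 K2'.
    apply: (IHD m _ (a0 :: c1 ++ b1 :: l1) (a0 :: c1) b1 l1 d a1 (al1 ++ t) Hl) => //.
    * by lia.
    * apply: (piece_intro (x1 := p) (y1 := a1 :: al1) (x2 := [::]) (y2 := b1 :: l1) HW Hl) => //.
      by right.
    * by move=> E; apply: Hab.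
    * exact: steps_rev.
Qed.

Lemma pc_steps A (R : relset A) u v : pres_cong R u v -> exists n, steps R n u v.
Proof.
elim=> [x y l r H|u0|u0 v0 _ [n Hn]|u0 v0 w0 _ [m Hm] _ [n Hn]].
- exists 1; apply: steps1; exists x, l, r, y; split=> //; by left.
- by exists 0; exact: st0.
- by exists n; exact: steps_rev.
- by exists (m + n); exact: steps_cat Hn.
Qed.

Lemma steps_pc A (R : relset A) n u v : steps R n u v -> pres_cong R u v.
Proof.
elim=> [u0|k u0 v0 w0 [c [l [r [d [H1 H2 H3]]]]] _ IH]; first exact: pc_refl.
apply: pc_trans IH; rewrite H2 H3; case: H1 => H.
- exact: pc_step.
- apply: pc_sym; exact: pc_step.
Qed.

Lemma nofactor_steps A (R : relset A) n r s :
  (forall c l d, relation_word R l -> r <> c ++ l ++ d) -> steps R n r s -> r = s.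
Proof.
move=> Hn H; case: H Hn => [//|k u v w [c [l [r' [d [H1 H2 H3]]]]] _] Hn.
by case: (Hn c l d (rl_rw H1).1 H2).
Qed.

Theorem corollary7 (A : Type) (R : relset A) :
  strongly_C R 4 ->
  (left_cancellative R <->
   ~ (exists (a : A) (r s : word A), R (a :: r, a :: s))).
Proof.
move=> [C4 NR]; split.
- move=> LC [a [r [s H]]].
  have Hc : pres_cong R ([:: a] ++ r) ([:: a] ++ s).
    have := pc_step [::] [::] H; by rewrite /= !cats0.
  have [n Hn] := pc_steps (LC _ _ _ Hc).
  have Hrw : relation_word R (a :: r) by exists (a :: s); left.
  have E : r = s.
    apply: (nofactor_steps _ Hn) => c l d Hl E.
    apply: (one_piece C4 Hl).
    apply: (piece_intro (x1 := a :: c) (y1 := d) (x2 := [::]) (y2 := [::]) Hrw Hl);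
      rewrite ?cats0 //; [by rewrite E | by right].
  subst s; by case: (NR _ _ _ _ H H).
- move=> NA a b c /pc_steps [n Hn].
  have M := main C4 NR NA.
  have [m _ Hm] := pcancel (n := n.+1) (fun m _ => (M m).1) (ltnSn n) Hn.
  exact: steps_pc Hm.
Qed.
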